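(* Let $G$ be a connected graph of order $n$ without isolated vertices and with maximum degree $\Delta(G)=n-1$. Then $\chi_{dom}(G)=\chi_d^t(G)=\chi(G)$.
   Context: All graphs are finite and simple. A proper coloring of $G$ partitions $V(G)$ into independent color classes; $\chi(G)$ is the chromatic number. A dominated coloring (dom-coloring) of $G$ is a proper coloring in which every color class is dominated by at least one vertex, i.e. for each color class $C$ there is a vertex of $G$ adjacent to every vertex of $C$; $\chi_{dom}(G)$ is the minimum number of colors in a dominated coloring. For $G$ without isolated vertices, a total dominator coloring is a proper coloring in which every vertex is adjacent to every vertex of some color class other than its own; $\chi_d^t(G)$ is the minimum number of colors in such a coloring. *)

(* Defs.v *)
From mathcomp Require Import all_boot.
Set Implicit Arguments. Unset Strict Implicit. Unset Printing Implicit Defensive.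

Section Graphs.
Variables (T : finType) (e : rel T).

Definition simple_graph : Prop := irreflexive e /\ symmetric e.

Definition no_isolated : Prop := forall v : T, exists u : T, e v u.

Definition connected_graph : Prop := forall x y : T, connect e x y.

Definition neighbourhood (v : T) : {set T} := [set u | e v u].

Definition deg (v : T) : nat := #|neighbourhood v|.

(* maximum degree of G (0 for the empty graph) *)
Definition max_degree : nat := \max_(v : T) deg v.

Definition independent (C : {set T}) : bool :=
  [forall x in C, forall y in C, ~~ e x y].

(* A proper coloring: a partition of V(G) into (nonempty) independent
   color classes; the number of colors is #|P|. *)
Definition proper_coloring (P : {set {set T}}) : bool :=
  partition P [set: T] && [forall C in P, independent C].

Definition dominates (v : T) (C : {set T}) : bool := [forall x in C, e v x].

Definition dom_coloring (P : {set {set T}}) : bool :=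
  proper_coloring P && [forall C in P, exists v, dominates v C].

Definition td_coloring (P : {set {set T}}) : bool :=
  proper_coloring P &&
  [forall v, exists C in P, (C != pblock P v) && dominates v C].

(* minimum number of colors; the default #|T| is attained by the partition
   into singletons whenever any such coloring exists at all. *)
Definition chromatic_number : nat :=
  \big[minn/#|T|]_(P : {set {set T}} | proper_coloring P) #|P|.
Definition chi_dom : nat :=
  \big[minn/#|T|]_(P : {set {set T}} | dom_coloring P) #|P|.
Definition chi_td : nat :=
  \big[minn/#|T|]_(P : {set {set T}} | td_coloring P) #|P|.

End Graphs.

(* Main.v *)
Require Import Defs.
From mathcomp Require Import all_boot.
Set Implicit Arguments.

Section Aux.
Variables (T : finType) (e : rel T).
Hypothesis sg : simple_graph e.
Hypothesis ni : no_isolated e.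
Hypothesis md : max_degree e = #|T| - 1.

Lemma univ_vertex (x : T) : exists w, forall u, u != w -> e w u.
Proof.
have h : (0 < #|T|)%N by apply/card_gt0P; exists x.
have [w Hw] := @eq_bigmax T (deg e) h.
exists w => u uw.
have Hsub : neighbourhood e w \subset [set~ w].
  apply/subsetP => y; rewrite inE in_setC1 => ewy.
  apply/eqP => yw; subst y; by rewrite (proj1 sg) in ewy.
have : neighbourhood e w == [set~ w].
  rewrite eqEcard Hsub cardsC1 /=.
  move: md; rewrite /max_degree Hw /deg => ->; by rewrite subn1.
move/eqP => Heq.
have : u \in [set~ w] by rewrite in_setC1.
by rewrite -Heq inE.
Qed.

Lemma indep_univ (P : {set {set T}}) w C x :
  proper_coloring e P -> (forall u, u != w -> e w u) ->
  C \in P -> w \in C -> x \in C -> x = w.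
Proof.
case/andP => _ /forallP Hi Hw CP wC xC.
apply/eqP; apply/negPn/negP => xw.
have := Hi C; rewrite CP /= => /forallP /(_ w) /implyP /(_ wC) /forallP /(_ x) /implyP /(_ xC).
by rewrite Hw.
Qed.

Lemma proper_all (P : {set {set T}}) :
  proper_coloring e P -> dom_coloring e P && td_coloring e P.
Proof.
move=> Hp; rewrite /dom_coloring /td_coloring Hp /=.
have [irr sym] := sg.
have Hpart := Hp; case/andP: Hpart => /and3P [/eqP Hcov _ nz] _.
have incov y : y \in cover P by rewrite Hcov inE.
apply/andP; split.
- apply/forallP => C; apply/implyP => CP.
  case: (set_0Vmem C) => [C0|[x xC]].
    by rewrite -C0 CP in nz.
  have [w Hw] := univ_vertex x.
  case wC: (w \in C).
  + have [u ewu] := ni w.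
    apply/existsP; exists u; apply/forallP => y; apply/implyP => yC.
    by rewrite (indep_univ Hp Hw CP wC yC) sym.
  + apply/existsP; exists w; apply/forallP => y; apply/implyP => yC.
    apply: Hw; apply/eqP => yw; subst y; by rewrite yC in wC.
- apply/forallP => v.
  have [w Hw] := univ_vertex v.
  have same a b : a \in pblock P b -> a != b -> e b a = false.
    move=> ab anb; apply/negP => eba.
    have bP := pblock_mem (incov b).
    have bb : b \in pblock P b by rewrite mem_pblock.
    case: (eqVneq a w) => [aw|aw].
      subst a; by rewrite (indep_univ Hp Hw bP ab bb) eqxx in anb.
    have := indep_univ Hp Hw bP.
    case: (eqVneq b w) => [bw|bw].
      subst b; move=> /(_ a bb ab) aw'; by rewrite aw' eqxx in aw.
    case/andP: Hp => _ /forallP /(_ (pblock P b)); rewrite bP /=.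
    by move=> /forallP /(_ b) /implyP /(_ bb) /forallP /(_ a) /implyP /(_ ab); rewrite eba.
  case: (eqVneq v w) => [vw|vw].
  + subst v; have [u ewu] := ni w.
    have uw : u != w by apply/eqP => uw; subst u; rewrite irr in ewu.
    apply/existsP; exists (pblock P u); rewrite pblock_mem //=.
    apply/andP; split.
      apply/eqP => Heq.
      have : w \in pblock P u by rewrite Heq mem_pblock.
      move=> wu; have := same w u wu; rewrite eq_sym uw sym ewu => /(_ isT) //.
    apply/forallP => y; apply/implyP => yC; apply: Hw.
    apply/eqP => yw; subst y.
    have := same w u yC; rewrite eq_sym uw sym ewu => /(_ isT) //.
  + apply/existsP; exists (pblock P w); rewrite pblock_mem //=.
    apply/andP; split.
      apply/eqP => Heq.
      have : v \in pblock P w by rewrite Heq mem_pblock.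
      move=> vwb; have := same v w vwb vw; by rewrite Hw.
    apply/forallP => y; apply/implyP => yC.
    have wP := pblock_mem (incov w).
    have ww : w \in pblock P w by rewrite mem_pblock.
    by rewrite (indep_univ Hp Hw wP ww yC) sym Hw.
Qed.
End Aux.

Theorem mainTheorem1 (T : finType) (e : rel T) :
  simple_graph e -> connected_graph e -> no_isolated e ->
  max_degree e = #|T| - 1 ->
  chi_dom e = chi_td e /\ chi_td e = chromatic_number e.
Proof.
move=> sg _ ni md.
have H1 P : dom_coloring e P = proper_coloring e P.
  apply/idP/idP => [/andP[]//|Hp]; by case/andP: (proper_all sg ni md P Hp).
have H2 P : td_coloring e P = proper_coloring e P.
  apply/idP/idP => [/andP[]//|Hp]; by case/andP: (proper_all sg ni md P Hp).
rewrite /chi_dom /chi_td /chromatic_number.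
by split; apply: eq_bigl => P; rewrite ?H1 ?H2.
Qed.
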